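(* Let $q\ge5$ and let $\mu\in\mathbb F_q^*\setminus\{1\}$ if $q$ is even or $q\equiv0\pmod3$, and $\mu\in\mathbb F_q^*\setminus\{1,1/9\}$ if $q$ is odd and $q\not\equiv0\pmod3$. The number of $\overline{1_{\mathcal C}}$-planes containing the line $\ell_\mu$ equals $\widetilde N_1(\mu)$ if $\mu$ is a square in $\mathbb F_q$, and $\widetilde N_1(\mu)+1$ otherwise.
   Context: In $\mathrm{PG}(3,q)$ with points $\mathbf P(x_0,x_1,x_2,x_3)$, the twisted cubic is $\mathcal C=\{\mathbf P(t^3,t^2,t,1):t\in\mathbb F_q\}\cup\{\mathbf P(1,0,0,0)\}$. Its osculating planes ($\Gamma$-planes) are $x_0-3tx_1+3t^2x_2-t^3x_3=0$ for $t\in\mathbb F_q$ and $x_3=0$. A $\overline{1_{\mathcal C}}$-plane is a plane which is not a $\Gamma$-plane and contains exactly one point of $\mathcal C$. $\ell_\mu$ is the line through $\mathbf P(0,\mu,0,1)$ and $\mathbf P(1,0,1,0)$. $\widetilde N_1(\mu)$ is the number of $c\in\mathbb F_q^*$ such that $t^3+ct^2-t-\mu c=0$ has exactly one solution $t\in\mathbb F_q$. *)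

(* Defs.v *)
From mathcomp Require Import all_boot all_order all_algebra all_field.
Set Implicit Arguments. Unset Strict Implicit. Unset Printing Implicit Defensive.
Import GRing.Theory.
Local Open Scope ring_scope.

(* PG(3,q) over a finite field F, q = #|F|.  Points and planes are given by
   nonzero coordinate quadruples (x0,x1,x2,x3) up to nonzero scalars.
   Each plane is represented uniquely by its normalized coefficient vector
   (first nonzero coordinate equal to 1). *)

Section PG3.
Variable F : finFieldType.

Definition vec4 : finType := (F * F * F * F)%type.

Definition scale4 (k : F) (a : vec4) : vec4 :=
  let: (a0, a1, a2, a3) := a in (k * a0, k * a1, k * a2, k * a3).

Definition proportional (a b : vec4) : bool :=
  [exists k : F, (k != 0) && (a == scale4 k b)].

Definition normalized (a : vec4) : bool :=
  let: (a0, a1, a2, a3) := a in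
  if a0 != 0 then a0 == 1 else
  if a1 != 0 then a1 == 1 else
  if a2 != 0 then a2 == 1 else a3 == 1.

Definition incident (a x : vec4) : bool :=
  let: (a0, a1, a2, a3) := a in
  let: (x0, x1, x2, x3) := x in
  a0 * x0 + a1 * x1 + a2 * x2 + a3 * x3 == 0.

Definition curve_pt (t : F) : vec4 := (t ^+ 3, t ^+ 2, t, 1).
Definition curve_inf : vec4 := (1, 0, 0, 0).

(* number of points of C on the plane a (the points above are pairwise
   distinct, so we count parameters) *)
Definition nC (a : vec4) : nat :=
  #|[set t : F | incident a (curve_pt t)]| + (incident a curve_inf : nat).

Definition osc (t : F) : vec4 := (1, - (3%:R * t), 3%:R * t ^+ 2, - t ^+ 3).
Definition osc_inf : vec4 := (0, 0, 0, 1).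

Definition Gamma_plane (a : vec4) : bool :=
  [exists t : F, proportional a (osc t)] || proportional a osc_inf.

Definition one_C_bar_plane (a : vec4) : bool :=
  ~~ Gamma_plane a && (nC a == 1%N).

Definition contains_ell (mu : F) (a : vec4) : bool :=
  incident a (0, mu, 0, 1) && incident a (1, 0, 1, 0).

Definition num_1Cbar_planes_through_ell (mu : F) : nat :=
  #|[set a : vec4 | normalized a & contains_ell mu a && one_C_bar_plane a]|.

Definition Ntilde1 (mu : F) : nat :=
  #|[set c : F | (c != 0) &&
       (#|[set t : F | t ^+ 3 + c * t ^+ 2 - t - mu * c == 0]| == 1%N)]|.

Definition is_square (x : F) : bool := [exists y : F, y ^+ 2 == x].

End PG3.

(* Main.v *)
Require Import Defs.
From mathcomp Require Import all_boot all_order all_algebra all_field.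
From mathcomp Require fingroup pgroup abelian.
From mathcomp Require Import ring.
Import GRing.Theory.
Local Open Scope ring_scope.

Lemma charq (F : finFieldType) (q : nat) : prime q -> (q %| #|F|)%N -> q%:R = 0 :> F.
Proof.
move=> pq dq.
have [p pp pc] := finPcharP F.
have := abelian.abelem_pgroup (abelian.fin_ring_pchar_abelem pc).
rewrite /pgroup.pgroup cardsT => pn.
have := pnat_dvd dq pn; rewrite pnatE // => /eqnP ->.
exact: pcharf0 pc.
Qed.

Section S.
Variable F : finFieldType.
Variable mu : F.

Definition gp (c : F) : vec4 F := (1, c, -1, - (mu * c)).
Definition pinf : vec4 F := (0, 1, 0, - mu).

Lemma gp_inj : injective gp.
Proof. by move=> c d [] ->. Qed.

Lemma L1 (a : vec4 F) : normalized a && contains_ell mu a ->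
  a = gp a.1.1.2 \/ a = pinf.
Proof.
case: a => [[[a0 a1] a2] a3] /=.
case/andP => Hn /andP [/eqP H1 /eqP H2].
have e2 : a2 = - a0 by apply/eqP; rewrite -subr_eq0 opprK; rewrite -H2; apply/eqP; ring.
have e3 : a3 = - (mu * a1) by apply/eqP; rewrite -subr_eq0 opprK; rewrite -H1; apply/eqP; ring.
subst a2 a3.
move: Hn; case: (eqVneq a0 0) => [->|a0n] /=.
  case: (eqVneq a1 0) => [->|a1n] /=.
    by rewrite mulr0 !oppr0 /= eqxx /= eq_sym oner_eq0.
  by move/eqP => ->; right; rewrite /pinf mulr1 oppr0.
by move/eqP => ->; left.
Qed.

Lemma gp_in c : normalized (gp c) && contains_ell mu (gp c).
Proof. rewrite /contains_ell /incident /gp /= oner_eq0 eqxx /=; apply/andP; split; apply/eqP; ring. Qed.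

Lemma pinf_in : normalized pinf && contains_ell mu pinf.
Proof. rewrite /contains_ell /incident /pinf /= !eqxx /= oner_neq0 /=; apply/andP; split; apply/eqP; ring. Qed.

Definition roots (c : F) := [set t : F | t ^+ 3 + c * t ^+ 2 - t - mu * c == 0].

Lemma nC_gp c : nC (gp c) = #|roots c|.
Proof.
rewrite /nC /incident /gp /=.
have -> : (1 * 1 + c * 0 + -1 * 0 + - (mu * c) * 0 == 0 :> F) = false.
  by rewrite !mulr0 !addr0 mulr1 oner_eq0.
rewrite addn0; apply: eq_card => t; rewrite !inE.
by congr (_ == _); ring.
Qed.

Lemma nC_pinf : nC pinf = (#|[set t : F | t ^+ 2 == mu]| + 1)%N.
Proof.
rewrite /nC /incident /pinf /=.
have -> : (0 * 1 + 1 * 0 + 0 * 0 + - mu * 0 == 0 :> F) = true.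
  by rewrite !mul0r !mulr0 !addr0 eqxx.
congr (_ + _)%N; apply: eq_card => t; rewrite !inE.
by rewrite -[t ^+ 2 == mu]subr_eq0; congr (_ == _); ring.
Qed.

Lemma NGp : ~~ Gamma_plane pinf.
Proof.
rewrite /Gamma_plane negb_or; apply/andP; split.
  apply/existsPn => t; apply/existsPn => k; apply/negP => /andP [kn /eqP E].
  rewrite /pinf /osc /scale4 in E; case: E => e0 _ _ _.
  by move: kn; rewrite -[k]mulr1 -e0 eqxx.
apply/existsPn => k; apply/negP => /andP [kn /eqP E].
rewrite /pinf /osc_inf /scale4 in E; case: E => _ e1 _ _.
by move: e1; rewrite mulr0 => /eqP; rewrite oner_eq0.
Qed.

Hypothesis mu1 : mu != 1.
Hypothesis mu9 : odd #|F| && (#|F| %% 3 != 0)%N -> mu != (9%:R)^-1.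

Lemma NGg c : ~~ Gamma_plane (gp c).
Proof.
rewrite /Gamma_plane negb_or; apply/andP; split; last first.
  apply/existsPn => k; apply/negP => /andP [kn /eqP E].
  rewrite /gp /osc_inf /scale4 in E; case: E => e0 _ _ _.
  by move: e0; rewrite mulr0 => /eqP; rewrite oner_eq0.
apply/existsPn => t; apply/existsPn => k; apply/negP => /andP [kn /eqP E].
rewrite /gp /osc /scale4 in E; case: E => e0 e1 e2 e3.
rewrite mulr1 in e0; subst k.
rewrite !mul1r in e1 e2 e3.
have e3' : mu * c = t ^+ 3 by rewrite -[mu * c]opprK e3 opprK.
have h3 : (3%:R : F) = 2%:R + 1 by rewrite natr1.
case: (eqVneq (2%:R : F) 0) => [h2|h2].
  have m1 : (-1 : F) = 1.
    by apply/eqP; rewrite -subr_eq0 -opprD -[1 + 1]/(2%:R) h2 oppr0.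
  rewrite h3 h2 add0r mul1r m1 in e2.
  have ht : (t - 1) ^+ 2 = 0.
    have -> : (t - 1) ^+ 2 = (t ^+ 2 + 1) - 2%:R * t by ring.
    by rewrite -e2 h2 mul0r subr0 -[1 + 1]/(2%:R) h2.
  move/eqP: ht; rewrite expf_eq0 /= subr_eq0 => /eqP ht; subst t.
  rewrite h3 h2 add0r mulr1 m1 in e1.
  by move: e3' mu1; rewrite e1 mulr1 expr1n => ->; rewrite eqxx.
case: (eqVneq (3%:R : F) 0) => [h3z|h3n].
  by move: e2; rewrite h3z mul0r => /eqP; rewrite oppr_eq0 oner_eq0.
have tn : t != 0.
  by apply/eqP => t0; move: e2; rewrite t0 expr0n mulr0 => /eqP; rewrite oppr_eq0 oner_eq0.
have e4 : - (3%:R * mu) = t ^+ 2.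
  apply: (mulIf tn); rewrite -exprSr -e3' e1; ring.
have n9 : (9%:R : F) != 0.
  by rewrite -[9%N]/(3 * 3)%N natrM mulf_neq0.
have m9 : mu = (9%:R)^-1.
  apply: (mulfI n9); rewrite divff //.
  rewrite -[9%N]/(3 * 3)%N natrM -mulrA -[_ * mu]opprK e4 mulrN -e2 opprK //.
have hq : odd #|F| && (#|F| %% 3 != 0)%N.
  apply/andP; split.
    apply/negPn; rewrite -dvdn2; apply/negP => /(charq F 2 erefl) h.
    by rewrite h eqxx in h2.
  have h3d : ~~ (3 %| #|F|)%N.
    by apply/negP => /(charq F 3 erefl) hh; rewrite hh eqxx in h3n.
  exact: h3d.
by move: (mu9 hq); rewrite m9 eqxx.
Qed.

Lemma Qg c : one_C_bar_plane (gp c) = (c != 0) && (#|roots c| == 1%N).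
Proof.
rewrite /one_C_bar_plane NGg /= nC_gp.
case: (eqVneq c 0) => [->|] //=.
have : [set 0; 1] \subset roots 0.
  by apply/subsetP => x; rewrite !inE => /orP [] /eqP ->; apply/eqP; ring.
move/subset_leq_card; rewrite cards2 eq_sym oner_eq0.
by case: #|roots 0| => [|[|n]].
Qed.

Lemma Qpinf : one_C_bar_plane pinf = ~~ is_square mu.
Proof.
rewrite /one_C_bar_plane NGp /= nC_pinf addn1 eqSS cards_eq0 /is_square.
apply/idP/idP.
  move/eqP=> A0; apply/existsPn => y; apply/negP => hy.
  have : y \in [set t : F | t ^+ 2 == mu] by rewrite inE.
  by rewrite A0 inE.
move/existsPn => h; apply/eqP/setP => y; rewrite !inE; exact: negbTE (h y).
Qed.
End S.
Arguments gp {F}. Arguments pinf {F}. Arguments roots {F}.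
Arguments L1 {F mu a}. Arguments gp_in {F}. Arguments pinf_in {F}. Arguments gp_inj {F}.
Arguments Qg {F mu}. Arguments Qpinf {F mu}.

Theorem lemma5p4 (F : finFieldType) (mu : F) :
  (5 <= #|F|)%N ->
  mu != 0 -> mu != 1 ->
  (odd #|F| && (#|F| %% 3 != 0)%N -> mu != (9%:R)^-1) ->
  num_1Cbar_planes_through_ell mu =
    (if is_square mu then Ntilde1 mu else (Ntilde1 mu).+1).
Proof.
move=> _ _ mu1 mu9.
set A := [set c : F | (c != 0) && (#|roots mu c| == 1%N)].
have hA : Ntilde1 mu = #|A| by [].
set S := [set a : vec4 F | normalized a & contains_ell mu a && one_C_bar_plane a].
have hS : S = if is_square mu then gp mu @: A else pinf mu |: gp mu @: A.
  apply/setP => a; rewrite inE andbA.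
  case H: (normalized a && contains_ell mu a) => /=.
    case: (L1 H) => ->.
      move: (a.1.1.2) => c; rewrite (Qg mu1 mu9).
      have gpn : (gp mu c == pinf mu) = false by apply/negbTE; rewrite /gp /pinf !xpair_eqE oner_eq0.
      by case: is_square; rewrite ?inE ?gpn (mem_imset _ _ (gp_inj mu)) inE.
    rewrite Qpinf.
    have hp : (pinf mu \in gp mu @: A) = false.
      by apply/negP => /imsetP [x _ [] /eqP]; rewrite eq_sym oner_eq0.
    by case: is_square; rewrite /= ?inE ?eqxx ?hp.
  have h1 : (a \in gp mu @: A) = false.
    by apply/negP => /imsetP [x _ ex]; move: H; rewrite ex gp_in.
  case: is_square; rewrite ?inE h1 ?orbF //.
  by apply/esym/negbTE/negP => /eqP ea; move: H; rewrite ea pinf_in.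
rewrite /num_1Cbar_planes_through_ell -/S hS hA.
case: is_square; first by rewrite card_imset //; exact: gp_inj.
rewrite cardsU1 card_imset; last exact: gp_inj.
have -> : (pinf mu \in gp mu @: A) = false.
  by apply/negP => /imsetP [x _ [] /eqP]; rewrite eq_sym oner_eq0.
by [].
Qed.
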